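(* For every real $x > 0$ and every natural number $n$, $\mathrm{LB}_{\ln}(x,n) \le \ln(x) \le \mathrm{UB}_{\ln}(x,n)$.
   Context: For $1 < x \le 2$ and natural $n$: \[\mathrm{LB}_{\ln}(x,n) = \sum_{i=1}^{2n}(-1)^{i+1}\frac{(x-1)^i}{i},\qquad \mathrm{UB}_{\ln}(x,n) = \sum_{i=1}^{2n+1}(-1)^{i+1}\frac{(x-1)^i}{i}.\] Further: $\mathrm{LB}_{\ln}(1,n)=\mathrm{UB}_{\ln}(1,n)=0$; for $0<x<1$: $\mathrm{LB}_{\ln}(x,n) = -\mathrm{UB}_{\ln}(1/x,n)$ and $\mathrm{UB}_{\ln}(x,n) = -\mathrm{LB}_{\ln}(1/x,n)$; for $x>2$: let $m$ be the natural number and $y$ the real with $x = 2^m y$ and $1 \le y < 2$ (equivalently $(m,y)=\mathrm{lnnat}(x,2)$, where $\mathrm{lnnat}(x,k)=(0,x)$ if $x<k$ and otherwise $(m'+1,y')$ with $(m',y')=\mathrm{lnnat}(x/k,k)$), and set $\mathrm{LB}_{\ln}(x,n) = m\,\mathrm{LB}_{\ln}(2,n) + \mathrm{LB}_{\ln}(y,n)$ and $\mathrm{UB}_{\ln}(x,n) = m\,\mathrm{UB}_{\ln}(2,n) + \mathrm{UB}_{\ln}(y,n)$. *)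

(* Defs.v *)
From Stdlib Require Import Reals Lra Lia ZArith.
Open Scope R_scope.

Fixpoint lnsum (x : R) (N : nat) : R :=
  match N with
  | O => 0
  | S N' => lnsum x N' + (-1) ^ (S N' + 1) * (x - 1) ^ (S N') / INR (S N')
  end.

(* Implemented with fuel; the recursion depth m satisfies k^m <= x, so for
   k = 2 and x > 0 the fuel Z.to_nat (up x) (> x >= 2^m > m) is always enough. *)
Fixpoint lnnat_fuel (fuel : nat) (x k : R) : nat * R :=
  match fuel with
  | O => (O, x)
  | S f =>
      if Rlt_dec x k then (O, x)
      else let (m', y') := lnnat_fuel f (x / k) k in (S m', y')
  end.

Definition lnnat (x k : R) : nat * R := lnnat_fuel (Z.to_nat (up x)) x k.

Definition LB_ln_ge1 (x : R) (n : nat) : R :=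
  if Rle_dec x 2 then lnsum x (2 * n)
  else let (m, y) := lnnat x 2 in
       INR m * lnsum 2 (2 * n) + lnsum y (2 * n).

Definition UB_ln_ge1 (x : R) (n : nat) : R :=
  if Rle_dec x 2 then lnsum x (2 * n + 1)
  else let (m, y) := lnnat x 2 in
       INR m * lnsum 2 (2 * n + 1) + lnsum y (2 * n + 1).

Definition LB_ln (x : R) (n : nat) : R :=
  if Rle_dec 1 x then LB_ln_ge1 x n else - UB_ln_ge1 (/ x) n.

Definition UB_ln (x : R) (n : nat) : R :=
  if Rle_dec 1 x then UB_ln_ge1 x n else - LB_ln_ge1 (/ x) n.

(* Main.v *)
Require Import Defs.
From Stdlib Require Import Reals Lra Lia.
From Coquelicot Require Import Coquelicot.
Open Scope R_scope.

Lemma lnsum_derive (N : nat) (y : R) : 0 < y ->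
  is_derive (fun z => lnsum z N) y ((1 - (1 - y) ^ N) / y).
Proof.
  intros Hy. induction N as [|N IH].
  - simpl. replace ((1 - 1) / y) with 0 by (field; lra).
    auto_derive; [exact I|ring].
  - replace ((1 - (1 - y) ^ S N) / y) with ((1 - (1 - y) ^ N) / y + (1 - y) ^ N)
      by (simpl; field; lra).
    set (c := (-1) ^ (S N + 1) / INR (S N)).
    apply is_derive_ext with (f := fun z => lnsum z N + c * (z - 1) ^ S N).
    { intros t. unfold c. change (lnsum t (S N)) with
        (lnsum t N + (-1) ^ (S N + 1) * (t - 1) ^ (S N) / INR (S N)).
      assert (E : forall a b d e : R, a + b / d * e = a + b * e / d)
        by (intros; unfold Rdiv; ring).
      apply E. }
    apply (is_derive_plus (fun z => lnsum z N) (fun z => c * (z - 1) ^ S N)); [exact IH|].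
    evar (d : R).
    assert (H : is_derive (fun z => c * (z - 1) ^ S N) y d).
    { unfold d. auto_derive. exact I. reflexivity. }
    replace ((1 - y) ^ N) with d; [exact H|].
    unfold d, c.
    replace (S N + 1)%nat with (N + 2)%nat by lia.
    rewrite pow_add. simpl pred.
    replace (1 - y) with ((-1) * (y - 1)) by ring.
    rewrite Rpow_mult_distr.
    change (match N with 0%nat => 1 | S _ => INR N + 1 end) with (INR (S N)).
    match goal with |- ?a = ?b => enough (E : @eq R a b) by exact E end.
    replace (y + - (1)) with (y - 1) by ring.
    generalize ((-1) ^ N) ((y - 1) ^ N) (not_0_INR (S N) ltac:(lia)); intros; simpl pow; field; auto.
Qed.

Lemma g_derive (N : nat) (y : R) : 0 < y ->
  is_derive (fun z => ln z - lnsum z N) y ((1 - y) ^ N / y).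
Proof.
  intros Hy.
  replace ((1 - y) ^ N / y) with (/ y - (1 - (1 - y) ^ N) / y) by (field; lra).
  apply (is_derive_minus ln (fun z => lnsum z N)).
  - apply is_derive_ln; lra.
  - apply lnsum_derive; lra.
Qed.

Lemma lnsum_1 (N : nat) : lnsum 1 N = 0.
Proof.
  induction N as [|N IH]; [reflexivity|].
  change (lnsum 1 N + (-1) ^ (S N + 1) * (1 - 1) ^ (S N) / INR (S N) = 0).
  rewrite IH. replace (1 - 1) with 0 by ring. rewrite pow_i by lia. unfold Rdiv. ring.
Qed.

Lemma g_mvt (N : nat) (y : R) : 1 <= y ->
  exists c, 1 <= c <= y /\ ln y - lnsum y N = (1 - c) ^ N / c * (y - 1).
Proof.
  intros Hy.
  destruct (MVT_gen (fun z => ln z - lnsum z N) 1 y (fun z => (1 - z) ^ N / z))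
    as [c [Hc E]].
  - intros z Hz. apply g_derive.
    pose proof (Rmin_l 1 y). unfold Rmin in *. destruct (Rle_dec 1 y); lra.
  - intros z Hz. apply continuity_pt_filterlim. apply (@ex_derive_continuous R_AbsRing R_NormedModule (fun z => ln z - lnsum z N)).
    eexists. apply g_derive.
    unfold Rmin in Hz. destruct (Rle_dec 1 y); lra.
  - exists c. unfold Rmin, Rmax in Hc. destruct (Rle_dec 1 y); [|lra].
    split; [lra|]. rewrite <- E. rewrite ln_1, lnsum_1. ring.
Qed.

Lemma lnsum_bounds (n : nat) (y : R) : 1 <= y ->
  lnsum y (2 * n) <= ln y <= lnsum y (2 * n + 1).
Proof.
  intros Hy. split.
  - destruct (g_mvt (2 * n) y Hy) as [c [Hc E]].
    assert (0 <= (1 - c) ^ (2 * n) / c * (y - 1)).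
    { apply Rmult_le_pos; [|lra]. apply Rmult_le_pos.
      - rewrite pow_mult. apply pow_le. nra.
      - left. apply Rinv_0_lt_compat. lra. }
    lra.
  - destruct (g_mvt (2 * n + 1) y Hy) as [c [Hc E]].
    assert (0 <= (c - 1) * ((1 - c) ^ 2) ^ n / c * (y - 1)).
    { apply Rmult_le_pos; [|lra]. apply Rmult_le_pos.
      - apply Rmult_le_pos; [lra|]. apply pow_le. nra.
      - left. apply Rinv_0_lt_compat. lra. }
    rewrite pow_add, pow_mult in E.
    assert (E2 : ((1 - c) ^ 2) ^ n * (1 - c) ^ 1 / c * (y - 1)
      = - ((c - 1) * ((1 - c) ^ 2) ^ n / c * (y - 1))).
    { generalize (((1 - c) ^ 2) ^ n); intro u. field; lra. }
    lra.
Qed.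

Lemma lnnat_fuel_spec (f : nat) : forall x m y, 1 <= x ->
  lnnat_fuel f x 2 = (m, y) -> x = 2 ^ m * y /\ 1 <= y.
Proof.
  induction f as [|f IH]; intros x m y Hx H; simpl in H.
  - inversion H; subst. simpl. split; [ring|lra].
  - destruct (Rlt_dec x 2).
    + inversion H; subst. simpl. split; [ring|lra].
    + destruct (lnnat_fuel f (x / 2) 2) as [m' y'] eqn:E.
      inversion H; subst.
      destruct (IH (x / 2) m' y) as [E1 E2]; [lra|exact E|].
      split; [|exact E2]. simpl. rewrite Rmult_assoc, <- E1. field.
Qed.

Lemma bounds_ge1 (x : R) (n : nat) : 1 <= x ->
  LB_ln_ge1 x n <= ln x <= UB_ln_ge1 x n.
Proof.
  intros Hx. unfold LB_ln_ge1, UB_ln_ge1.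
  destruct (Rle_dec x 2); [apply lnsum_bounds; lra|].
  destruct (lnnat x 2) as [m y] eqn:E. unfold lnnat in E.
  destruct (lnnat_fuel_spec _ x m y Hx E) as [E1 E2].
  assert (Hl : ln x = INR m * ln 2 + ln y).
  { rewrite E1, ln_mult, ln_pow; try lra. apply pow_lt; lra. }
  destruct (lnsum_bounds n 2 ltac:(lra)).
  destruct (lnsum_bounds n y E2).
  pose proof (pos_INR m).
  rewrite Hl. split.
  - apply Rplus_le_compat; [apply Rmult_le_compat_l|]; lra.
  - apply Rplus_le_compat; [apply Rmult_le_compat_l|]; lra.
Qed.

Theorem proposition8 (x : R) (n : nat) (hx : 0 < x) :
  LB_ln x n <= ln x <= UB_ln x n.
Proof.
  unfold LB_ln, UB_ln.
  destruct (Rle_dec 1 x) as [H|H].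
  - apply bounds_ge1; exact H.
  - assert (Hi : 1 <= / x).
    { rewrite <- Rinv_1. apply Rinv_le_contravar; lra. }
    destruct (bounds_ge1 (/ x) n Hi).
    rewrite ln_Rinv in * by lra. lra.
Qed.
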